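(* Let $\varepsilon>0$ and let $\alpha,\beta\in\mathbb{Z}[\mathrm{i}]$ be non-zero multiplicatively independent Gaussian integers with $|\alpha|>1$ and $|\beta|>1$. Then there exist integers $m,n>0$ such that $|\alpha^m-\beta^n|<\varepsilon|\beta^n|$.
   Context: $\alpha,\beta$ are multiplicatively independent if there are no positive integers $j,k$ with $\beta^j=\alpha^k$. *)

(* Defs.v *)
From HB Require Import structures.
From mathcomp Require Import all_boot all_order all_algebra all_field.
Set Implicit Arguments. Unset Strict Implicit. Unset Printing Implicit Defensive.
Import Order.TTheory GRing.Theory Num.Theory.
Local Open Scope ring_scope.

Definition gaussian_int (z : algC) : Prop :=
  exists a b : int, z = a%:~R + b%:~R * 'i.

Definition mult_indep (alpha beta : algC) : Prop :=
  ~ exists j k : nat, [/\ (0 < j)%N, (0 < k)%N & beta ^+ j = alpha ^+ k].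

(* Main.v *)
Require Import Defs.
From HB Require Import structures.
From mathcomp Require Import all_boot all_order all_algebra all_field.
From mathcomp Require Import ring.
Import Order.TTheory GRing.Theory Num.Theory.
Local Open Scope ring_scope.

Lemma bern (x : algC) (n : nat) : 1 <= x -> 1 + n%:R * (x - 1) <= x ^+ n.
Proof.
move=> x1; elim: n => [|n IH]; first by rewrite mul0r addr0 expr0.
rewrite -subr_ge0.
have -> : x ^+ n.+1 - (1 + n.+1%:R * (x - 1)) =
   (x ^+ n - (1 + n%:R * (x - 1))) * x + n%:R * ((x - 1) * (x - 1)).
  by rewrite exprSr -addn1 natrD; ring.
apply: addr_ge0; first by apply: mulr_ge0; [rewrite subr_ge0 | exact: le_trans ler01 x1].
by apply: mulr_ge0 => //; apply: mulr_ge0; rewrite subr_ge0.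
Qed.

Lemma exists_pow (x y : algC) : 1 < x -> 0 <= y -> exists m : nat, y < x ^+ m.
Proof.
move=> x1 y0.
have x10 : 0 < x - 1 by rewrite subr_gt0.
have q0 : 0 <= y / (x - 1) by apply: divr_ge0 => //; apply: ltW.
exists (Num.truncn (y / (x - 1))).+1.
have /andP[_ h] := truncn_itv q0.
have h2 : y < (Num.truncn (y / (x - 1))).+1%:R * (x - 1).
  by rewrite -ltr_pdivrMr.
apply: (lt_le_trans h2); apply: le_trans _ (bern _ _ (ltW x1)).
by rewrite lerDr.
Qed.

Lemma trunc_close (x y : algC) : 0 <= x -> 0 <= y ->
  Num.truncn x = Num.truncn y -> `|x - y| < 1.
Proof.
move=> x0 y0 e.
have /andP[hx1 hx2] := truncn_itv x0.
have /andP[hy1 hy2] := truncn_itv y0.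
rewrite e in hx1 hx2.
have rxy : x - y \is Num.real by apply: rpredB; apply: ger0_real.
rewrite real_ltr_norml //; apply/andP; split.
  rewrite ltrBrDl ltrBlDr.
  apply: lt_le_trans hy2 _.
  by rewrite -natr1 lerD2r.
rewrite ltrBlDr.
apply: lt_le_trans hx2 _.
by rewrite -natr1 addrC lerD2l.
Qed.

Lemma Re_le (w : algC) : `|'Re w| <= `|w|.
Proof.
rewrite -(ler_pXn2r (n:=2)) // ?qualifE /= ?normr_ge0 //.
rewrite [`|w| ^+ 2]normC2_Re_Im real_normK ?algCreal_Re // lerDl.
by rewrite -real_normK ?Creal_Im // exprn_ge0.
Qed.

Lemma Im_le (w : algC) : `|'Im w| <= `|w|.
Proof.
rewrite -(ler_pXn2r (n:=2)) // ?qualifE /= ?normr_ge0 //.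
rewrite [`|w| ^+ 2]normC2_Re_Im (real_normK (Creal_Im w)) lerDr.
by rewrite -real_normK ?Creal_Re // exprn_ge0.
Qed.

Lemma shift_bound (x : algC) : x \is Num.real -> `|x| < 1 -> 0 <= x + 1 < 2.
Proof.
move=> xr; rewrite real_ltr_norml // => /andP[h1 h2].
apply/andP; split.
  by rewrite -lerBlDr sub0r ltW.
by rewrite -[2%:R]natr1 ltrD2r.
Qed.

Lemma norm_split (w1 w2 : algC) :
  `|w1 - w2| <= `|'Re w1 - 'Re w2| + `|'Im w1 - 'Im w2|.
Proof.
have -> : w1 - w2 = ('Re w1 - 'Re w2) + 'i * ('Im w1 - 'Im w2).
  by rewrite {1}[w1]algCrect {1}[w2]algCrect; ring.
by apply: le_trans (ler_normD _ _) _; rewrite normrM normCi mul1r.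
Qed.

Lemma ident (a b : algC) n1 n M1 m : a != 0 -> b != 0 ->
  a ^+ m - b ^+ n = b ^+ n * (b ^+ n1 / a ^+ M1 - b ^+ (n1 + n) / a ^+ (M1 + m))
     / (b ^+ (n1 + n) / a ^+ (M1 + m)).
Proof.
move=> a0 b0; rewrite !exprD.
have ha1 : a ^+ M1 != 0 by rewrite expf_neq0.
have ha2 : a ^+ m != 0 by rewrite expf_neq0.
have hb1 : b ^+ n1 != 0 by rewrite expf_neq0.
have hb2 : b ^+ n != 0 by rewrite expf_neq0.
by field; rewrite ha1 ha2 hb1 hb2.
Qed.

Lemma get_eta (e c : algC) : 0 < e -> 0 < c ->
  exists eta, [/\ 0 < eta, eta <= e & eta <= c].
Proof.
move=> e0 c0; case: (boolP (e <= c)) => ec.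
  by exists e.
exists c; split => //.
by apply: ltW; rewrite real_ltNge ?gtr0_real.
Qed.

Lemma mainlem (e a b : algC) : 0 < e -> 1 < `|a| -> 1 < `|b| ->
  exists m n : nat, [/\ (0 < m)%N, (0 < n)%N &
    `|a ^+ m - b ^+ n| < e * `|b ^+ n|].
Proof.
move=> e0 A1 B1.
set A := `|a|; set B := `|b|.
have A0 : 0 < A by apply: lt_trans A1.
have B0 : 0 < B by apply: lt_trans B1.
have a0 : a != 0 by rewrite -normr_gt0.
have b0 : b != 0 by rewrite -normr_gt0.
have exm : forall n, exists m, (fun m => B ^+ n < A ^+ m) m.
  by move=> n; apply: exists_pow => //; rewrite exprn_ge0 // ltW.
pose M n := ex_minn (exm n).
have MP n : B ^+ n < A ^+ (M n) /\ (forall k, B ^+ n < A ^+ k -> (M n <= k)%N).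
  by rewrite /M; case: ex_minnP.
have M0 n : (0 < M n)%N.
  case: (MP n) => h _; rewrite lt0n; apply/negP => /eqP E.
  move: h; rewrite E expr0 => h.
  by have := exprn_ege1 n (ltW B1); rewrite (lt_geF h).
have Mlow n : A ^+ (M n).-1 <= B ^+ n.
  rewrite real_leNgt ?rpredX ?gtr0_real //; apply/negP => h.
  by have := (MP n).2 _ h; rewrite leqNgt ltn_predL M0.
have Mmono n1 n2 : (n1 <= n2)%N -> (M n1 <= M n2)%N.
  move=> le12; apply: (MP n1).2; apply: le_lt_trans (MP n2).1.
  by rewrite ler_eXn2l.
pose w n := b ^+ n / a ^+ (M n).
have nw n : `|w n| = B ^+ n / A ^+ (M n) by rewrite /w normrM normfV !normrX.
have Apos n : 0 < A ^+ n by rewrite exprn_gt0.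
have w1 n : `|w n| < 1.
  by rewrite nw ltr_pdivrMr // mul1r; case: (MP n).
have w2 n : 1 <= A * `|w n|.
  rewrite nw mulrA ler_pdivlMr // mul1r.
  rewrite -(prednK (M0 n)) exprS ler_pM2l //; exact: Mlow.
have c0 : 0 < 1 - B^-1 by rewrite subr_gt0 invf_lt1.
have [eta [eta0 etae etac]] := get_eta _ _ e0 c0.
pose d := eta / A.
have d0 : 0 < d by apply: divr_gt0.
pose h := d / 2%:R.
have h0 : 0 < h by apply: divr_gt0.
have hh : h + h = d by rewrite /h; field.
have dA : d * A = eta by rewrite /d divfK // lt0r_neq0.
pose c1 n := Num.truncn (('Re (w n) + 1) / h).
pose c2 n := Num.truncn (('Im (w n) + 1) / h).
pose K := Num.truncn (2%:R / h).
have hi0 : 0 < h^-1 by rewrite invr_gt0.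
have Rb n : 0 <= 'Re (w n) + 1 < 2%:R.
  by apply: shift_bound; [exact: algCreal_Re | exact: le_lt_trans (Re_le _) (w1 n)].
have Ib n : 0 <= 'Im (w n) + 1 < 2%:R.
  by apply: shift_bound; [exact: Creal_Im | exact: le_lt_trans (Im_le _) (w1 n)].
have cb n : (c1 n < K.+1)%N /\ (c2 n < K.+1)%N.
  split; rewrite ltnS; apply: le_truncn; rewrite ler_pM2r //.
    by case/andP: (Rb n) => _ /ltW.
  by case/andP: (Ib n) => _ /ltW.
have close x y : 0 <= x < 2%:R -> 0 <= y < 2%:R ->
    Num.truncn (x / h) = Num.truncn (y / h) -> `|x - y| < h.
  move=> /andP[x0 _] /andP[y0 _] E.
  have := trunc_close _ _ (divr_ge0 x0 (ltW h0)) (divr_ge0 y0 (ltW h0)) E.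
  have -> : x / h - y / h = (x - y) / h by rewrite mulrBl.
  by rewrite normrM normfV (gtr0_norm h0) ltr_pdivrMr // mul1r.
have key n1 n2 : (n1 < n2)%N -> c1 n1 = c1 n2 -> c2 n1 = c2 n2 ->
  exists m n : nat, [/\ (0 < m)%N, (0 < n)%N &
    `|a ^+ m - b ^+ n| < e * `|b ^+ n|].
  move=> lt12 e1 e2.
  have hre := close _ _ (Rb n1) (Rb n2) e1.
  have him := close _ _ (Ib n1) (Ib n2) e2.
  have hre' : `|'Re (w n1) - 'Re (w n2)| < h.
    by move: hre; congr (`|_| < _); rewrite opprD addrACA subrr addr0.
  have him' : `|'Im (w n1) - 'Im (w n2)| < h.
    by move: him; congr (`|_| < _); rewrite opprD addrACA subrr addr0.
  have wd : `|w n1 - w n2| < d.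
    by apply: le_lt_trans (norm_split _ _) _; rewrite -hh ltrD.
  have le12 : (M n1 <= M n2)%N by apply: Mmono; apply: ltnW.
  have E : a ^+ (M n2 - M n1) - b ^+ (n2 - n1) =
       b ^+ (n2 - n1) * (w n1 - w n2) / w n2.
    have := ident a b n1 (n2 - n1) (M n1) (M n2 - M n1) a0 b0.
    by rewrite !subnKC // ltnW.
  have wn0 : w n2 != 0 by rewrite /w mulf_neq0 ?invr_eq0 ?expf_neq0.
  have wpos : 0 < `|w n2| by rewrite normr_gt0.
  have iw : `|w n2|^-1 <= A.
    by rewrite -[_^-1]mul1r ler_pdivrMr // mulrC; exact: w2.
  have bpos : 0 < `|b ^+ (n2 - n1)| by rewrite normr_gt0 expf_neq0.
  have Hfin : `|a ^+ (M n2 - M n1) - b ^+ (n2 - n1)| < eta * `|b ^+ (n2 - n1)|.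
    rewrite E !normrM normfV -mulrA (mulrC eta) ltr_pM2l //.
    apply: le_lt_trans (_ : _ <= `|w n1 - w n2| * A) _.
      by apply: ler_wpM2l.
    by rewrite -dA ltr_pM2r.
  exists (M n2 - M n1)%N, (n2 - n1)%N; split.
  - rewrite lt0n; apply/negP => /eqP m0.
    move: Hfin; rewrite m0 expr0 distrC => H.
    have H1 := lerB_normD (b ^+ (n2 - n1)) (-1).
    rewrite normrN normr1 in H1.
    have H2 : eta * `|b ^+ (n2 - n1)| <= `|b ^+ (n2 - n1)| - 1.
      apply: le_trans (_ : (1 - B^-1) * `|b ^+ (n2 - n1)| <= _).
        by rewrite ler_pM2r.
      rewrite mulrBl mul1r; apply: lerB => //.
      rewrite mulrC ler_pdivlMr // mul1r normrX.
      by rewrite -{1}(expr1 B) ler_eXn2l // subn_gt0.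
    by have := lt_le_trans H (le_trans H2 H1); rewrite ltxx.
  - by rewrite subn_gt0.
  - by apply: lt_le_trans Hfin _; rewrite ler_pM2r.
pose N := (K.+1 * K.+1)%N.
pose f (i : 'I_N.+1) : 'I_K.+1 * 'I_K.+1 := (inord (c1 i), inord (c2 i)).
case: (boolP [exists i : 'I_N.+1, [exists j : 'I_N.+1, (i != j) && (f i == f j)]]).
  move/existsP => [i /existsP [j /andP [ne /eqP fe]]].
  have [e1 e2] : c1 i = c1 j /\ c2 i = c2 j.
    have [bi1 bi2] := cb i; have [bj1 bj2] := cb j.
    have E1 := congr1 fst fe; have E2 := congr1 snd fe; rewrite /f /= in E1 E2.
    split.
      by rewrite -(inordK bi1) -(inordK bj1) E1.
    by rewrite -(inordK bi2) -(inordK bj2) E2.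
  case: (ltngtP i j) => [lt|lt|eq].
  - exact: key lt e1 e2.
  - exact: key lt (esym e1) (esym e2).
  - by rewrite (val_inj eq) eqxx in ne.
move=> H; exfalso.
have inj : injective f.
  move=> i j fe; apply/eqP; apply/negPn/negP => ne; move/negP: H; apply.
  by apply/existsP; exists i; apply/existsP; exists j; rewrite ne fe eqxx.
by have := leq_card _ inj; rewrite card_prod !card_ord ltnn.
Qed.

Theorem corollary2p3 (eps alpha beta : algC) :
  0 < eps ->
  gaussian_int alpha -> gaussian_int beta ->
  alpha != 0 -> beta != 0 ->
  mult_indep alpha beta ->
  1 < `|alpha| -> 1 < `|beta| ->
  exists m n : nat, [/\ (0 < m)%N, (0 < n)%N &
    `|alpha ^+ m - beta ^+ n| < eps * `|beta ^+ n|].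
Proof.
move=> e0 _ _ _ _ _ A1 B1.
exact: mainlem e0 A1 B1.
Qed.
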